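(* Assume $0<\bar p<1$ and let $\hat{\mathcal C}=\{c\in\mathcal C:\ p_c\ge\bar p\}$. Suppose further: (i) there exist probability distributions $P_0,P_1$ on $\mathcal Y$ and a map $\lambda:\mathcal C\to[0,1]$ such that for every $c\in\mathcal C$, $P_{Y\mid C=c}=P_{\lambda(c)}:=(1-\lambda(c))P_0+\lambda(c)P_1$; set $\bar\lambda=\mathbb E[\lambda(C)]$, so that $P_Y=P_{\bar\lambda}$; (ii) (monotone alignment) for all $c_1,c_2\in S:=\{c\in\hat{\mathcal C}:\lambda(c)\ge\bar\lambda\}$, $\mathrm{IG}(Z;C=c_1)\ge\mathrm{IG}(Z;C=c_2)$ implies $\lambda(c_1)\ge\lambda(c_2)$. Then for all $c_1,c_2\in S$, $$\mathrm{IG}(Z;C=c_1)\ge\mathrm{IG}(Z;C=c_2)\implies \mathrm{IG}(Y;C=c_1)\ge\mathrm{IG}(Y;C=c_2),$$ and every maximizer of $c\mapsto\mathrm{IG}(Z;C=c)$ over $S$ is a maximizer of $c\mapsto\mathrm{IG}(Y;C=c)$ over $S$, i.e. $\operatorname*{argmax}_{c\in S}\mathrm{IG}(Z;C=c)\subseteq\operatorname*{argmax}_{c\in S}\mathrm{IG}(Y;C=c)$. In particular, if $S\neq\emptyset$ and $\mathrm{IG}(Y;C=\cdot)$ has a unique maximizer over $S$, then $\operatorname*{argmax}_{c\in S}\mathrm{IG}(Z;C=c)=\operatorname*{argmax}_{c\in S}\mathrm{IG}(Y;C=c)$.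
   Context: Let $(C,Y,Z)$ be jointly distributed random variables, where $C$ takes values in a finite set $\mathcal C$ of candidate evidences with $P(C=c)>0$ for every $c\in\mathcal C$, $Y$ takes values in a finite set $\mathcal Y$, and $Z\in\{0,1\}$ (a Bernoulli ''helpfulness'' variable). Write $P_{Y\mid C=c}$, $P_Y$, $P_{Z\mid C=c}$, $P_Z$ for the conditional and marginal laws. Define $p_c=P(Z=1\mid C=c)$ and $\bar p=P(Z=1)$, so $P_{Z\mid C=c}=\mathrm{Bern}(p_c)$ and $P_Z=\mathrm{Bern}(\bar p)$. For distributions $\mu,\mu'$ on a finite set, $D_{\mathrm{KL}}(\mu\|\mu')=\sum_y\mu(y)\log\frac{\mu(y)}{\mu'(y)}\in[0,\infty]$ (with $0\log 0=0$, and value $+\infty$ if $\mu$ is not absolutely continuous w.r.t. $\mu'$). The evidence-wise information gains are $\mathrm{IG}(Y;C=c)=D_{\mathrm{KL}}(P_{Y\mid C=c}\,\|\,P_Y)$ and $\mathrm{IG}(Z;C=c)=D_{\mathrm{KL}}(P_{Z\mid C=c}\,\|\,P_Z)$. $\operatorname{argmax}$ denotes the set of maximizers. *)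

(* Defs.v *)
From mathcomp Require Import all_boot all_order all_algebra.
From mathcomp Require Import reals ereal exp.
Set Implicit Arguments. Unset Strict Implicit. Unset Printing Implicit Defensive.
Import Order.TTheory GRing.Theory Num.Theory.
Local Open Scope ring_scope.

Section Defs.
Variable R : realType.

Definition KL (T : finType) (mu mu' : T -> R) : \bar R :=
  if [forall y, (mu y != 0) ==> (mu' y != 0)]
  then (\sum_(y : T) (if mu y == 0 then 0 else mu y * ln (mu y / mu' y)))%:E
  else +oo%E.

(* Bernoulli law on {0,1} = bool (true = 1). *)
Definition bern (p : R) : bool -> R := fun b => if b then p else 1 - p.

Definition is_distr (T : finType) (mu : T -> R) : Prop :=
  (forall t, 0 <= mu t) /\ \sum_(t : T) mu t = 1.

Variables (C Y : finType).
Variable P : C -> Y -> bool -> R.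

Definition PC (c : C) : R := \sum_(y : Y) \sum_(z : bool) P c y z.
Definition PY (y : Y) : R := \sum_(c : C) \sum_(z : bool) P c y z.
Definition PYgC (c : C) : Y -> R := fun y => (\sum_(z : bool) P c y z) / PC c.
Definition pc (c : C) : R := (\sum_(y : Y) P c y true) / PC c.
Definition pbar : R := \sum_(c : C) \sum_(y : Y) P c y true.

Definition IGY (c : C) : \bar R := KL (PYgC c) PY.
Definition IGZ (c : C) : \bar R := KL (bern (pc c)) (bern pbar).

End Defs.

Definition mixture (R : realType) (Y : finType) (P0 P1 : Y -> R) (l : R) : Y -> R :=
  fun y => (1 - l) * P0 y + l * P1 y.

Definition argmax (R : realType) (T : Type) (S : T -> Prop) (f : T -> \bar R) : T -> Prop :=
  fun t => S t /\ forall t', S t' -> (f t' <= f t)%E.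

(* Main.v *)
Require Import Defs.
From mathcomp Require Import all_boot all_order all_algebra.
From mathcomp Require Import reals ereal exp.
From mathcomp Require Import boolp ring lra.
Import Order.TTheory GRing.Theory Num.Theory.
Local Open Scope ring_scope.

Lemma ln_ratio_le (R : realType) (A B : R) : 0 < A -> 0 < B -> B * (ln A - ln B) <= A - B.
Proof.
move=> A0 B0.
have h := @le_ln1Dx R (A / B - 1).
have hAB : 0 < A / B by rewrite divr_gt0.
have : ln (A / B) <= A / B - 1.
  have e : A / B = 1 + (A / B - 1) by ring.
  rewrite [X in ln X]e; apply: h; lra.
rewrite ln_div ?posrE // => H.
have : B * (ln A - ln B) <= B * (A / B - 1) by rewrite ler_pM2l.
have -> : B * (A / B - 1) = A - B by field; rewrite gt_eqF.
done.
Qed.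

Lemma pt_ineq (R : realType) (q al be d : R) :
  0 <= q -> 0 <= al -> al <= be -> 0 <= q + al * d -> 0 <= q + be * d ->
  (q + be * d != 0 -> q != 0) -> (q + al * d != 0 -> q != 0) ->
  (if q + al * d == 0 then 0 else (q + al * d) * ln ((q + al * d) / q))
    + ((q + be * d) - (q + al * d))
  <= (if q + be * d == 0 then 0 else (q + be * d) * ln ((q + be * d) / q)).
Proof.
set A := q + al * d; set B := q + be * d.
move=> q0 al0 albe A0 B0 hB hA.
have [q0e|qn0] := eqVneq q 0.
  have A00 : A = 0 by case: (eqVneq A 0) => // /hA; rewrite q0e eqxx.
  have B00 : B = 0 by case: (eqVneq B 0) => // /hB; rewrite q0e eqxx.
  by rewrite A00 B00 eqxx; lra.
have qp : 0 < q by rewrite lt_def qn0.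
have [A00|An0] := eqVneq A 0.
  have alp : 0 < al.
    rewrite lt_def al0 andbT; apply/eqP => e; move: A00; rewrite /A e mul0r addr0 => e2.
    by move: qn0; rewrite e2 eqxx.
  have : al * B <= 0.
    have -> : al * B = (al - be) * q + be * A by rewrite /A /B; ring.
    rewrite A00 mulr0 addr0; apply: mulr_le0_ge0 => //; lra.
  rewrite pmulr_rle0 // => Ble0.
  have B00 : B = 0 by apply/eqP; rewrite eq_le Ble0 B0.
  by rewrite A00 B00 eqxx; lra.
have Ap : 0 < A by rewrite lt_def An0 A0.
have [B00|Bn0] := eqVneq B 0.
    have bep : 0 < be.
    rewrite lt_def (le_trans al0 albe) andbT; apply/eqP => e.
    move: B00; rewrite /B e mul0r addr0 => e2; by move: qn0; rewrite e2 eqxx.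
  have : be * A <= be * q.
    have -> : be * A = (be - al) * q + al * B by rewrite /A /B; ring.
    rewrite B00 mulr0 addr0; apply: ler_wpM2r; lra.
  rewrite ler_pM2l // => Aleq.
  have : ln (A / q) <= 0 by apply: ln_le0; rewrite ler_pdivrMr // mul1r.
  move=> h; have : A * ln (A / q) <= 0 by apply: mulr_ge0_le0 => //; lra.
  lra.
have Bp : 0 < B by rewrite lt_def Bn0 B0.
rewrite !ln_div ?posrE //.
have h1 := @ln_ratio_le R A B Ap Bp.
have h2 : 0 <= (B - A) * (ln A - ln q).
  have eBA : B - A = (be - al) * d by rewrite /A /B; ring.
  have eAq : A - q = al * d by rewrite /A; ring.
  have [d0|d0] := lerP 0 d.
    apply: mulr_ge0; first by rewrite eBA; apply: mulr_ge0 => //; lra.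
    rewrite subr_ge0 ler_ln ?posrE //.
    have : 0 <= al * d by apply: mulr_ge0. lra.
  apply: mulr_le0.
    rewrite eBA; apply: mulr_ge0_le0; lra.
  rewrite subr_le0 ler_ln ?posrE //.
  have : al * d <= 0 by apply: mulr_ge0_le0 => //; lra. lra.
nra.
Qed.
Lemma supp_ineq (R : realType) (q al be d : R) :
  0 <= al -> al <= be ->
  (q + be * d != 0 -> q != 0) -> (q + al * d != 0 -> q != 0).
Proof.
move=> al0 albe hB hA.
apply/negP => /eqP q0; move: hA; rewrite q0 add0r => hA.
have : q + be * d = 0 by case: (eqVneq (q + be * d) 0) => // /hB; rewrite q0 eqxx.
rewrite q0 add0r => /eqP; rewrite mulf_eq0 => /orP [/eqP be0|/eqP d0].
  have al00 : al = 0 by apply/eqP; rewrite eq_le al0 -be0 albe.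
  by move: hA; rewrite al00 mul0r eqxx.
by move: hA; rewrite d0 mulr0 eqxx.
Qed.

Lemma KL_mono (R : realType) (Y : finType) (P0 P1 : Y -> R) (m a b : R) :
  \sum_y P0 y = \sum_y P1 y -> m <= a -> a <= b ->
  (forall y, 0 <= mixture P0 P1 m y) -> (forall y, 0 <= mixture P0 P1 a y) ->
  (forall y, 0 <= mixture P0 P1 b y) ->
  (KL (mixture P0 P1 a) (mixture P0 P1 m) <= KL (mixture P0 P1 b) (mixture P0 P1 m))%E.
Proof.
move=> hsum ma ab hm ha hb.
have e : forall x y, mixture P0 P1 x y
   = mixture P0 P1 m y + (x - m) * (P1 y - P0 y).
  by move=> x y; rewrite /mixture; ring.
rewrite /KL.
set fb := [forall y, (mixture P0 P1 b y != 0) ==> _].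
case hbf: fb; last by rewrite leey.
have -> : [forall y, (mixture P0 P1 a y != 0) ==> (mixture P0 P1 m y != 0)].
  apply/forallP => y; apply/implyP.
  move: (forallP hbf y) => /implyP hy.
  rewrite (e a y); apply: (@supp_ineq R _ (a - m) (b - m)); try lra.
  by rewrite -(e b y).
rewrite lee_fin.
pose A y := mixture P0 P1 a y; pose B y := mixture P0 P1 b y.
have hS : \sum_y (B y - A y) = 0.
  rewrite sumrB /B /A /mixture !big_split /= -!mulr_sumr hsum; ring.
apply: (@le_trans _ _ (\sum_y ((if mixture P0 P1 a y == 0 then 0
     else mixture P0 P1 a y * ln (mixture P0 P1 a y / mixture P0 P1 m y)) + (B y - A y)))).
  by rewrite big_split /= hS addr0.
apply: ler_sum => y _.
move: (forallP hbf y) => /implyP hy.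
rewrite /A /B (e a y) (e b y).
apply: pt_ineq; try lra.
- by have := hm y.
- by rewrite -e; apply: ha.
- by rewrite -e; apply: hb.
- by rewrite -e.
- apply: (@supp_ineq R _ (a - m) (b - m)); try lra. by rewrite -(e b y).
Qed.

Theorem theorem1 (R : realType) (C Y : finType) (P : C -> Y -> bool -> R)
  (P_nonneg : forall c y z, 0 <= P c y z)
  (P_sum1 : \sum_(c : C) \sum_(y : Y) \sum_(z : bool) P c y z = 1)
  (PC_pos : forall c, 0 < PC P c)
  (pbar_pos : 0 < pbar P) (pbar_lt1 : pbar P < 1)
  (P0 P1 : Y -> R) (lam : C -> R)
  (P0_distr : is_distr P0) (P1_distr : is_distr P1)
  (lam_01 : forall c, 0 <= lam c <= 1)
  (mix : forall c, PYgC P c = mixture P0 P1 (lam c)) :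
  let lambar := \sum_(c : C) PC P c * lam c in
  let S := fun c : C => pbar P <= pc P c /\ lambar <= lam c in
  (forall c1 c2, S c1 -> S c2 ->
     (IGZ P c2 <= IGZ P c1)%E -> lam c2 <= lam c1) ->
  (forall c1 c2, S c1 -> S c2 ->
     (IGZ P c2 <= IGZ P c1)%E -> (IGY P c2 <= IGY P c1)%E)
  /\ (forall c, argmax S (IGZ P) c -> argmax S (IGY P) c)
  /\ ((exists c, S c) ->
      (exists c0, forall c, argmax S (IGY P) c <-> c = c0) ->
      forall c, argmax S (IGZ P) c <-> argmax S (IGY P) c).
Proof.
move=> lambar S Halign.
have sumPC : \sum_c PC P c = 1 by rewrite /PC.
have PYeq : PY P = mixture P0 P1 lambar.
  apply/funext => y; rewrite /PY /mixture.
  have -> : \sum_c \sum_z P c y z = \sum_c (PC P c * P0 y - (PC P c * lam c) * P0 y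
            + (PC P c * lam c) * P1 y).
    apply: eq_bigr => c _.
    have := congr1 (fun f => f y) (mix c); rewrite /PYgC /mixture /= => h.
    have hpc := PC_pos c.
    have -> : \sum_z P c y z = PC P c * ((\sum_z P c y z) / PC P c).
      by field; rewrite gt_eqF.
    rewrite h; ring.
  rewrite big_split sumrB /= -!mulr_suml sumPC /lambar; ring.
have IGYe : forall c, IGY P c = KL (mixture P0 P1 (lam c)) (mixture P0 P1 lambar).
  by move=> c; rewrite /IGY mix PYeq.
have nnm : forall y, 0 <= mixture P0 P1 lambar y.
  move=> y; rewrite -PYeq /PY; apply: sumr_ge0 => c _; apply: sumr_ge0 => z _; exact: P_nonneg.
have nnc : forall c y, 0 <= mixture P0 P1 (lam c) y.
  move=> c y; rewrite -mix /PYgC; apply: divr_ge0; last exact: ltW.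
  apply: sumr_ge0 => z _; exact: P_nonneg.
have hs : \sum_y P0 y = \sum_y P1 y by rewrite P0_distr.2 P1_distr.2.
have part1 : forall c1 c2, S c1 -> S c2 ->
     (IGZ P c2 <= IGZ P c1)%E -> (IGY P c2 <= IGY P c1)%E.
  move=> c1 c2 S1 S2 hz.
  have hl := Halign c1 c2 S1 S2 hz.
  rewrite !IGYe; apply: KL_mono => //; by case: S2.
have part2 : forall c, argmax S (IGZ P) c -> argmax S (IGY P) c.
  move=> c [Sc Hc]; split => // c' Sc'; exact: part1 (Hc c' Sc').
split => //; split => // [[c1 Sc1]] [c0 Hc0] c; split; first exact: part2.
move=> Hyc.
pose Sb := fun c => (pbar P <= pc P c) && (lambar <= lam c).
have Sb1 : Sb c1 by rewrite /Sb; case: Sc1 => -> ->.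
have SbS : forall c, Sb c -> S c by move=> c' /andP.
have SSb : forall c, S c -> Sb c by move=> c' [h1 h2]; rewrite /Sb h1 h2.
case: (@arg_maxP _ _ _ c1 Sb (IGZ P) Sb1) => cm Scm Hcm.
have Hz : argmax S (IGZ P) cm.
  split; first exact: SbS.
  by move=> c' /SSb /Hcm.
have := part2 _ Hz => /Hc0 ecm.
have /Hc0 ec := Hyc.
by rewrite ec -ecm.
Qed.
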